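(* Let $P$ be an $n$-element poset written as $P=P_1+P_2+\cdots+P_k$ with each $P_i$ nonempty and not expressible as a disjoint sum of two nonempty posets. Suppose $|P_k|\ge|P_i|$ for all $i$, and that for some $0\le m\le k-1$ the components $P_1,\dots,P_m$ are singletons while none of $P_{m+1},\dots,P_{k-1}$ is a singleton. Then $\mathrm{ext}(P)\le \frac{n!}{n-m}$.
   Context: For a finite poset $P$, $\mathrm{ext}(P)$ denotes the number of linear extensions of $P$. The disjoint sum $P+Q$ of posets $P,Q$ is the poset on the disjoint union of their ground sets in which $x\le y$ iff $x,y$ lie in the same summand and are related there. *)

(* Defs.v *)
From HB Require Import structures.
From mathcomp Require Import all_boot all_order all_algebra.
Set Implicit Arguments. Unset Strict Implicit. Unset Printing Implicit Defensive.

Definition is_poset (T : finType) (le : rel T) : Prop :=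
  reflexive le /\ antisymmetric le /\ transitive le.

(* ext(P): number of linear extensions, i.e. of order-preserving
   bijections P -> {0,...,n-1}, n = |P|. *)
Definition ext (T : finType) (le : rel T) : nat :=
  #|[pred g : {ffun T -> 'I_#|T|} |
      injectiveb g && [forall x, forall y, le x y ==> (g x <= g y)%N]]|.

Definition decomposable (T : finType) (le : rel T) (A : {set T}) : Prop :=
  exists B C : {set T},
    [/\ B :|: C = A, [disjoint B & C], B != set0, C != set0 &
        forall x y, x \in B -> y \in C -> ~~ le x y && ~~ le y x].

(* The i-th summand of a decomposition given by a labelling c. *)
Definition block (T : finType) (k : nat) (c : T -> 'I_k) (i : 'I_k) : {set T} :=
  [set x | c x == i].

(* Main.v *)
Require Import Defs.
From HB Require Import structures.
From mathcomp Require Import all_boot all_order all_algebra.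
From mathcomp Require Import zify.
Set Implicit Arguments. Unset Strict Implicit. Unset Printing Implicit Defensive.

Definition vals (T : finType) (C : {set T}) (h : {ffun T -> 'I_#|T|}) : seq nat :=
  sort leq [seq val (h y) | y <- enum C].
Definition idx (T : finType) (C : {set T}) (h : {ffun T -> 'I_#|T|}) (x : T) : nat :=
  index (val (h x)) (vals C h).
Definition rot (T : finType) (C : {set T}) (h : {ffun T -> 'I_#|T|}) (t : nat)
  : {ffun T -> 'I_#|T|} :=
  [ffun x => if x \in C then insubd (h x) (nth 0 (vals C h) ((idx C h x + t) %% #|C|))
             else h x].

Lemma size_vals (T : finType) (C : {set T}) (h : {ffun T -> 'I_#|T|}) : size (@vals T C h) = #|C|.
Proof. by rewrite /vals size_sort size_map cardE. Qed.

Lemma uniq_vals (T : finType) (C : {set T}) (h : {ffun T -> 'I_#|T|}) : injective h -> uniq (@vals T C h).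
Proof.
move=> hi; rewrite /vals sort_uniq map_inj_uniq ?enum_uniq //.
by move=> x y /val_inj /hi.
Qed.

Lemma mem_vals (T : finType) (C : {set T}) (h : {ffun T -> 'I_#|T|}) v : (v \in @vals T C h) = (v \in [seq val (h y) | y <- enum C]).
Proof. by rewrite /vals mem_sort. Qed.

Lemma sorted_vals (T : finType) (C : {set T}) (h : {ffun T -> 'I_#|T|}) : sorted leq (@vals T C h).
Proof. exact: (sort_sorted leq_total). Qed.

Lemma vals_in (T : finType) (C : {set T}) (h : {ffun T -> 'I_#|T|}) x : x \in C -> val (h x) \in @vals T C h.
Proof. by move=> xC; rewrite mem_vals; apply: map_f; rewrite mem_enum. Qed.

Lemma idx_lt (T : finType) (C : {set T}) (h : {ffun T -> 'I_#|T|}) x : x \in C -> @idx T C h x < #|C|.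
Proof. by move=> xC; rewrite /idx -(size_vals C h) index_mem vals_in. Qed.

Lemma nth_idx (T : finType) (C : {set T}) (h : {ffun T -> 'I_#|T|}) x : x \in C -> nth 0 (@vals T C h) (idx C h x) = val (h x).
Proof. by move=> xC; rewrite /idx nth_index // vals_in. Qed.

Lemma nth_vals (T : finType) (C : {set T}) (h : {ffun T -> 'I_#|T|}) r : r < #|C| ->
  exists2 y, y \in C & nth 0 (@vals T C h) r = val (h y).
Proof.
move=> rs; have : nth 0 (vals C h) r \in vals C h by rewrite mem_nth // size_vals.
by rewrite mem_vals => /mapP [y]; rewrite mem_enum => yC ->; exists y.
Qed.

Lemma rot_in (T : finType) (C : {set T}) (h : {ffun T -> 'I_#|T|}) t x : x \in C ->
  val (@rot T C h t x) = nth 0 (vals C h) ((idx C h x + t) %% #|C|).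
Proof.
move=> xC; rewrite /rot ffunE xC.
have cpos : 0 < #|C| by apply/card_gt0P; exists x.
have [y yC ->] := nth_vals h (ltn_pmod (idx C h x + t) cpos).
by rewrite insubdK //; exact: ltn_ord.
Qed.

Lemma rot_out (T : finType) (C : {set T}) (h : {ffun T -> 'I_#|T|}) t x : x \notin C -> @rot T C h t x = h x.
Proof. by move=> xC; rewrite /rot ffunE (negbTE xC). Qed.

Lemma modD_inj s a b t : a < s -> b < s -> (a + t) %% s = (b + t) %% s -> a = b.
Proof.
move=> ha hb /eqP; rewrite eqn_modDr !modn_small // => /eqP //.
Qed.

Lemma rot_inj (T : finType) (C : {set T}) (h : {ffun T -> 'I_#|T|}) t : injective h -> injective (@rot T C h t).
Proof.
move=> hi.
have key : forall x y, x \in C -> y \notin C -> rot C h t x <> rot C h t y.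
  move=> x y xC yC /(congr1 val); rewrite rot_in // rot_out //.
  have cpos : 0 < #|C| by apply/card_gt0P; exists x.
  have [z zC ->] := nth_vals h (ltn_pmod (idx C h x + t) cpos).
  by move=> /val_inj /hi zy; move: yC; rewrite -zy zC.
move=> x y.
case xC: (x \in C); case yC: (y \in C).
- have cpos : 0 < #|C| by apply/card_gt0P; exists x.
  move=> /(congr1 val); rewrite !rot_in // => /eqP.
  rewrite nth_uniq ?size_vals ?ltn_pmod ?uniq_vals //.
  move=> /eqP /modD_inj; rewrite !idx_lt // => /(_ erefl erefl) e.
  by apply: hi; apply: val_inj; rewrite -(nth_idx h xC) -(nth_idx h yC) e.
- by move=> /key; rewrite xC yC => /(_ erefl erefl).
- by move=> e; symmetry in e; move: e => /key; rewrite xC yC => /(_ erefl erefl).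
- by rewrite !rot_out ?xC ?yC // => /hi.
Qed.

Lemma vals_rot (T : finType) (C : {set T}) (h : {ffun T -> 'I_#|T|}) t :
  injective h -> vals C (rot C h t) = vals C h.
Proof.
move=> hi; apply/perm_sortP; [exact: leq_total | exact: leq_trans | exact: anti_leq |].
have u1 : uniq [seq val (rot C h t y) | y <- enum C].
  by rewrite map_inj_uniq ?enum_uniq // => x y /val_inj /(rot_inj hi).
have u2 : uniq [seq val (h y) | y <- enum C].
  by rewrite map_inj_uniq ?enum_uniq // => x y /val_inj /hi.
apply: uniq_perm => //.
have sub : {subset [seq val (rot C h t y) | y <- enum C] <= [seq val (h y) | y <- enum C]}.
  move=> v /mapP [y]; rewrite mem_enum => yC ->.
  rewrite rot_in //.
  have cpos : 0 < #|C| by apply/card_gt0P; exists y.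
  have [z zC ->] := nth_vals h (ltn_pmod (idx C h y + t) cpos).
  by apply: map_f; rewrite mem_enum.
have sz : size [seq val (h y) | y <- enum C] <= size [seq val (rot C h t y) | y <- enum C].
  by rewrite !size_map.
exact: (uniq_min_size u1 sub sz).2.
Qed.

Lemma idx_rot (T : finType) (C : {set T}) (h : {ffun T -> 'I_#|T|}) t x :
  injective h -> x \in C -> idx C (rot C h t) x = (idx C h x + t) %% #|C|.
Proof.
move=> hi xC; rewrite /idx vals_rot // rot_in // index_uniq ?uniq_vals //.
by rewrite size_vals ltn_pmod //; apply/card_gt0P; exists x.
Qed.

Lemma idx_mono (T : finType) (C : {set T}) (h : {ffun T -> 'I_#|T|}) x y :
  injective h -> x \in C -> y \in C -> val (h x) <= val (h y) -> idx C h x <= idx C h y.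
Proof.
move=> hi xC yC hxy; rewrite leqNgt; apply/negP => lt.
have := sorted_ltn_index leq_trans (sorted_vals C h) _ _ (vals_in h yC) (vals_in h xC) lt.
move=> hyx.
have e : val (h x) = val (h y) by apply/eqP; rewrite eqn_leq hxy hyx.
by move: lt; rewrite /idx e ltnn.
Qed.

Lemma idx_surj (T : finType) (C : {set T}) (h : {ffun T -> 'I_#|T|}) r :
  injective h -> r < #|C| -> exists2 y, y \in C & idx C h y = r.
Proof.
move=> hi rs; have [y yC e] := nth_vals h rs; exists y => //.
by rewrite /idx -e index_uniq ?size_vals ?uniq_vals.
Qed.

Lemma mod2 s x : x < s + s -> x %% s = if x < s then x else x - s.
Proof.
move=> xs; case: (ltnP x s) => [lt|sx]; first by rewrite modn_small.
rewrite -[x in x %% s](subnK sx) modnDr modn_small //; lia.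
Qed.

Lemma mod_eq_cases s p q : p < s + s -> q < s + s -> p %% s = q %% s ->
  p = q \/ p = q + s \/ p + s = q.
Proof.
move=> hp hq; rewrite (mod2 hp) (mod2 hq).
case: (ltnP p s); case: (ltnP q s); lia.
Qed.

Lemma no_shift (T : finType) (le : rel T) (C : {set T}) (h h' : {ffun T -> 'I_#|T|}) t t' :
  injective h -> injective h' ->
  (forall x y, x \in C -> y \in C -> le x y -> val (h x) <= val (h y)) ->
  (forall x y, x \in C -> y \in C -> le x y -> val (h' x) <= val (h' y)) ->
  ~ decomposable le C -> t' < t -> t < #|C| ->
  (forall x, x \in C -> (idx C h x + t) %% #|C| = (idx C h' x + t') %% #|C|) -> False.
Proof.
move=> hi hi' mh mh' nd tt ts E.
set s := #|C| in ts E.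
have F x : x \in C -> [/\ idx C h x < s, idx C h' x < s &
   (idx C h x + t = idx C h' x + t' \/ idx C h x + t = idx C h' x + t' + s
    \/ idx C h x + t + s = idx C h' x + t')].
  move=> xC; have a1 := idx_lt h xC; have a2 := idx_lt h' xC.
  split => //; apply: mod_eq_cases; rewrite ?E //; lia.
apply: nd.
exists [set x in C | s <= idx C h x + (t - t')], [set x in C | idx C h x + (t - t') < s].
split.
- apply/setP => x; rewrite !inE; case: (x \in C) => //=.
  by case: leqP.
- rewrite disjoints_subset; apply/subsetP => x; rewrite !inE => /andP[_ h1].
  by apply/negP => /andP[_ h2]; lia.
- apply/set0Pn.
  have [y yC ay] := @idx_surj T C h s.-1 hi ltac:(lia).
  by exists y; rewrite inE yC ay /=; lia.
- apply/set0Pn.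
  have [y yC ay] := @idx_surj T C h 0 hi ltac:(lia).
  by exists y; rewrite inE yC ay /=; lia.
- move=> x y; rewrite !inE => /andP[xC hx] /andP[yC hy].
  have [ax a'x Ex] := F x xC; have [ay a'y Ey] := F y yC.
  apply/andP; split; apply/negP => lexy.
  + have := idx_mono hi xC yC (mh _ _ xC yC lexy); lia.
  + have := idx_mono hi' yC xC (mh' _ _ yC xC lexy); lia.
Qed.

Lemma rot_eq (T : finType) (le : rel T) (C : {set T}) (h h' : {ffun T -> 'I_#|T|}) t t' :
  injective h -> injective h' ->
  (forall x y, x \in C -> y \in C -> le x y -> val (h x) <= val (h y)) ->
  (forall x y, x \in C -> y \in C -> le x y -> val (h' x) <= val (h' y)) ->
  ~ decomposable le C -> t < #|C| -> t' < #|C| ->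
  rot C h t = rot C h' t' -> h = h' /\ t = t'.
Proof.
move=> hi hi' mh mh' nd ts ts' e.
have E x : x \in C -> (idx C h x + t) %% #|C| = (idx C h' x + t') %% #|C|.
  by move=> xC; rewrite -!idx_rot // e.
case: (ltngtP t t') => tt.
- by exfalso; apply: (no_shift hi' hi mh' mh nd tt ts') => x xC; rewrite E.
- by exfalso; apply: (no_shift hi hi' mh mh' nd tt ts) => x xC; rewrite E.
subst t'; split => //.
have V : vals C h = vals C h' by rewrite -(@vals_rot T C h t hi) -(@vals_rot T C h' t hi') e.
apply/ffunP => x; case xC: (x \in C).
- have ee := modD_inj (idx_lt h xC) (idx_lt h' xC) (E x xC).
  by apply: val_inj; rewrite -(nth_idx h xC) -(nth_idx h' xC) V ee.
- by rewrite -(@rot_out T C h t x (negbT xC)) -(@rot_out T C h' t x (negbT xC)) e.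
Qed.

Definition Wp (T : finType) (le : rel T) (k : nat) (c : T -> 'I_k) (j : nat)
  : simpl_pred {ffun T -> 'I_#|T|} :=
  [pred g : {ffun T -> 'I_#|T|} | injectiveb g &&
     [forall x, forall y, ((c x < j) && le x y) ==> (val (g x) <= val (g y))]].

Lemma WpP (T : finType) (le : rel T) (k : nat) (c : T -> 'I_k) j (g : {ffun T -> 'I_#|T|}) :
  reflect (injective g /\ forall x y, c x < j -> le x y -> val (g x) <= val (g y))
          (g \in Wp le c j).
Proof.
rewrite inE /=; apply: (iffP andP) => [[/injectiveP gi /forallP H]|[gi H]].
  split => // x y cx lxy; have /forallP/(_ y) := H x.
  by rewrite cx lxy.
split; first exact/injectiveP.
apply/forallP => x; apply/forallP => y; apply/implyP => /andP[cx lxy]; exact: H.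
Qed.

Lemma step (T : finType) (le : rel T) (k : nat) (c : T -> 'I_k) (i : 'I_k) :
  (forall x y, le x y -> c x = c y) -> ~ decomposable le (block c i) ->
  #|block c i| * #|Wp le c i.+1| <= #|Wp le c i|.
Proof.
move=> Hc nd.
set C := block c i; set s := #|C|.
pose D := [set p : {ffun T -> 'I_#|T|} * 'I_s | p.1 \in Wp le c i.+1].
pose f := fun p : {ffun T -> 'I_#|T|} * 'I_s => rot C p.1 p.2.
have cD : #|D| = #|Wp le c i.+1| * s.
  have -> : D = setX [set g | g \in Wp le c i.+1] [set: 'I_s].
    by apply/setP => -[g r]; rewrite !inE andbT.
  by rewrite cardsX cardsT card_ord cardsE.
have monoC g : g \in Wp le c i.+1 ->
    forall x y, x \in C -> y \in C -> le x y -> val (g x) <= val (g y).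
  move=> /WpP [_ H] x y; rewrite !inE => /eqP cx _; apply: H; by rewrite cx.
have inj : {in D &, injective f}.
  move=> [g r] [g' r']; rewrite !in_set /= => gW g'W e.
  have /WpP [gi _] := gW; have /WpP [g'i _] := g'W.
  have [-> er] := rot_eq gi g'i (monoC _ gW) (monoC _ g'W) nd (ltn_ord r) (ltn_ord r') e.
  by congr (_, _); apply: val_inj.
have sub : f @: D \subset [set g | g \in Wp le c i].
  apply/subsetP => g' /imsetP [[g r]]; rewrite !in_set /= => gW ->.
  have /WpP [gi H] := gW.
  apply/WpP; split; first exact: rot_inj.
  move=> x y cx lxy.
  have xC : x \notin C by rewrite inE; apply/eqP => e; move: cx; rewrite e ltnn.
  have yC : y \notin C by rewrite inE -(Hc _ _ lxy); apply/eqP => e; move: cx; rewrite e ltnn.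
  rewrite /f /= !rot_out //; apply: H => //; exact: ltnW.
rewrite mulnC -cD -(card_in_imset inj) -[X in _ <= X]cardsE.
exact: subset_leq_card.
Qed.

Definition sz (T : finType) (k : nat) (c : T -> 'I_k) (j : nat) : nat :=
  #|[set x | val (c x) == j]|.

Lemma sz_block (T : finType) (k : nat) (c : T -> 'I_k) (i : 'I_k) :
  #|block c i| = sz c i.
Proof. by rewrite /sz /block; apply: eq_card => x; rewrite !inE. Qed.

Lemma iter_step (T : finType) (le : rel T) (k : nat) (c : T -> 'I_k) :
  (forall x y, le x y -> c x = c y) -> (forall i, ~ decomposable le (block c i)) ->
  forall j, j <= k -> (\prod_(0 <= i < j) sz c i) * #|Wp le c j| <= #|Wp le c 0|.
Proof.
move=> Hc nd; elim=> [|j IH] jk; first by rewrite big_nil mul1n.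
rewrite big_nat_recr //= -mulnA.
apply: leq_trans (IH (ltnW jk)); rewrite leq_mul2l; apply/orP; right.
have := step Hc (nd (Ordinal jk)); rewrite sz_block //.
Qed.

Lemma sum_prod (f : nat -> nat) m d : 0 < d ->
  (forall i, m <= i < m + d -> 2 <= f i) ->
  \sum_(m <= i < m + d) f i <= \prod_(m <= i < m + d) f i /\
  2 <= \prod_(m <= i < m + d) f i.
Proof.
elim: d => [//|d IH] _ H.
case: d IH H => [|d] IH H.
  rewrite addn1 !big_nat1; have := H m; lia.
rewrite addnS big_nat_recr ?leq_addr // [in X in _ /\ X]big_nat_recr ?leq_addr //.
rewrite big_nat_recr ?leq_addr //=.
have [h1 h2] := IH erefl (fun i hi => H i ltac:(lia)).
have := H (m + d.+1) ltac:(lia).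
set P := \prod_(m <= i < m + d.+1) f i; set S := \sum_(m <= i < m + d.+1) f i.
move=> hf; split; nia.
Qed.

Lemma sum_sz (T : finType) (k : nat) (c : T -> 'I_k) :
  #|T| = \sum_(0 <= i < k) sz c i.
Proof.
rewrite big_mkord -sum1_card (partition_big c predT) //=.
apply: eq_bigr => i _; rewrite sum1_card /sz.
by apply: eq_card => x; rewrite !inE.
Qed.

Import GRing.Theory Num.Theory.
Unset Implicit Arguments.
Theorem lemma6p2 (T : finType) (le : rel T) (k m : nat) (c : T -> 'I_k) :
  is_poset le ->
  (* P = P_1 + ... + P_k : comparable elements lie in the same summand *)
  (forall x y, le x y -> c x = c y) ->
  (forall i, block c i != set0) ->
  (forall i, ~ decomposable le (block c i)) ->
  (* |P_k| >= |P_i| (P_k is the summand with index k-1) *)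
  (forall i j : 'I_k, val j = k.-1 -> #|block c i| <= #|block c j|)%N ->
  (m <= k - 1)%N -> (0 < k)%N ->
  (forall i : 'I_k, (i < m)%N -> #|block c i| = 1%N) ->
  (forall i : 'I_k, (m <= i)%N -> (i < k.-1)%N -> #|block c i| != 1%N) ->
  ((ext le)%:R <= (#|T|`!)%:R / (#|T| - m)%:R :> rat)%R.
Proof.
move=> _ Hc Hne Hnd Hmax hm hk H1 H2.
have Wk : #|Wp le c k| = ext le.
  rewrite /ext; apply: eq_card => g; rewrite !inE /=; congr (_ && _).
  apply: eq_forallb => x; apply: eq_forallb => y; by rewrite ltn_ord.
have W0 : #|Wp le c 0| = #|T|`!.
  rewrite -ffactnn -[X in X ^_ _](card_ord #|T|) -card_inj_ffuns.
  by apply: eq_card => g; rewrite !inE /=; case: injectiveb => //=; apply/forallP => x; apply/forallP.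
have main := iter_step Hc Hnd (leqnn k); rewrite Wk W0 in main.
have szpos i : i < k -> 0 < sz c i.
  by move=> ik; have := Hne (Ordinal ik); rewrite -card_gt0 sz_block.
have sz1 i : i < m -> sz c i = 1.
  move=> im; have ik : i < k by lia.
  by have := H1 (Ordinal ik) im; rewrite sz_block.
have sz2 i : m <= i -> i < k.-1 -> 2 <= sz c i.
  move=> mi ik; have ik' : i < k by lia.
  have := H2 (Ordinal ik') mi ik; have := szpos i ik'.
  rewrite sz_block /=; lia.
have mk : m <= k by lia.
have e1 : \sum_(0 <= i < k) sz c i = m + \sum_(m <= i < k) sz c i.
  rewrite (big_cat_nat (leq0n m) mk); congr (_ + _).
  rewrite (eq_big_nat _ _ (F2 := fun=> 1)); last by move=> i /andP[_ im]; exact: sz1.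
  by rewrite sum_nat_const_nat; lia.
have e2 : \prod_(0 <= i < k) sz c i = \prod_(m <= i < k) sz c i.
  rewrite (big_cat_nat (leq0n m) mk).
  have p1 : \prod_(0 <= i < m) sz c i = 1.
    by rewrite big_nat_cond big1 // => i /andP[/andP[_ im] _]; exact: sz1.
  by rewrite /= p1 mul1n.
have SP : \sum_(m <= i < k) sz c i <= \prod_(m <= i < k) sz c i.
  have kmd : k = m + (k - m) by lia.
  case: (ltnP (k - m) 2) => d2.
    have k1 : k <= m.+1 by lia.
    have mk1 : m < k by lia.
    rewrite (big_ltn mk1) (big_geq k1) [X in _ <= X](big_ltn mk1) (big_geq k1) /=.
    by rewrite addn0 muln1.
  suff H : forall i, m <= i < m + (k - m) -> 2 <= sz c i.
    by have := (sum_prod (f := sz c) (m := m) (d := k - m) ltac:(lia) H).1; rewrite -kmd.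
  move=> i /andP[mi ik]; rewrite -kmd in ik.
  case: (ltnP i k.-1) => ik'; first exact: sz2.
  have -> : i = k.-1 by lia.
  have km1 : k.-1 < k by lia.
  have mk1 : m < k by lia.
  have := Hmax (Ordinal mk1) (Ordinal km1) erefl.
  rewrite !sz_block /=.
  have : 2 <= sz c m by apply: sz2; lia.
  lia.
have nm : #|T| - m = \sum_(m <= i < k) sz c i by rewrite (sum_sz c) e1; lia.
have pos : (0 < (#|T| - m)%:R :> rat)%R.
  rewrite ltr0n nm.
  have mk1 : m < k by lia.
  rewrite (big_ltn mk1) /=.
  have := szpos m mk1; lia.
rewrite ler_pdivlMr // -natrM ler_nat nm.
apply: leq_trans main; rewrite e2 mulnC; exact: leq_mul.
Qed.
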